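(* Let $(\varphi_t)_{t\ge0}$ be a semigroup of analytic functions in the unit disk $\mathbb{D}$ and let $X$ be a Banach space of analytic functions on $\mathbb{D}$ on which each composition operator $C_t f=f\circ\varphi_t$ is bounded, such that (i) polynomials are dense in $X$; (ii) there is a constant $C>0$ such that if $f,g\in X$ and $|f|\le|g|$ on $\mathbb{D}$, then $\|f\|_X\le C\|g\|_X$; (iii) $M:=\limsup_{t\to0^+}\|C_t\|<+\infty$; (iv) the functions $\varphi_t$ ($t\ge0$) belong to $X$ and $\lim_{t\to0^+}\|\varphi_t-\varphi_0\|_X=0$. Then the semigroup of operators $(C_t)_{t\ge0}$ is strongly continuous on $X$, i.e. $\lim_{t\to0^+}\|f\circ\varphi_t-f\|_X=0$ for every $f\in X$.
   Context: A semigroup of analytic functions is a family $\{\varphi_t:t\ge0\}$ of analytic self-maps of $\mathbb{D}$ such that $\varphi_0$ is the identity, $\varphi_{t+s}=\varphi_t\circ\varphi_s$ for all $t,s\ge0$, and $\varphi_t\to\varphi_0$ uniformly on compact subsets of $\mathbb{D}$ as $t\to0^+$. *)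

(* Defs.v *)
From Stdlib Require Import Reals.
From Coquelicot Require Import Coquelicot.
Open Scope R_scope.

Definition in_disk (z : C) : Prop := Cmod z < 1.

Definition analytic_on_disk (f : C -> C) : Prop :=
  forall z : C, in_disk z -> @ex_derive C_AbsRing C_NormedModule f z.

Definition fzero : C -> C := fun _ => RtoC 0.
Definition fadd (f g : C -> C) : C -> C := fun z => Cplus (f z) (g z).
Definition fsub (f g : C -> C) : C -> C := fun z => Cminus (f z) (g z).
Definition fscal (a : C) (f : C -> C) : C -> C := fun z => Cmult a (f z).
Definition fcomp (f g : C -> C) : C -> C := fun z => f (g z).

Definition polyfun (a : nat -> C) (n : nat) : C -> C :=
  fun z => @sum_n C_Ring (fun k => Cmult (a k) (Cpow z k)) n.

(* Semigroup of analytic functions in D (indexed by t >= 0; values of phi t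
   for t < 0 and outside D are irrelevant). *)
Definition is_semigroup (phi : R -> C -> C) : Prop :=
  (forall t, 0 <= t -> analytic_on_disk (phi t)) /\
  (forall t, 0 <= t -> forall z, in_disk z -> in_disk (phi t z)) /\
  (forall z, in_disk z -> phi 0 z = z) /\
  (forall t s, 0 <= t -> 0 <= s -> forall z, in_disk z ->
      phi (t + s) z = phi t (phi s z)) /\
  (* phi_t -> phi_0 uniformly on compact subsets of D as t -> 0+;
     every compact subset of D lies in a closed disk |z| <= r, r < 1 *)
  (forall r, 0 <= r < 1 -> forall eps, 0 < eps -> exists delta, 0 < delta /\
      forall t, 0 < t < delta -> forall z, Cmod z <= r ->
        Cmod (Cminus (phi t z) (phi 0 z)) < eps).

Definition is_banach_space_of_analytic (X : (C -> C) -> Prop) (N : (C -> C) -> R) : Prop :=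
  (forall f, X f -> analytic_on_disk f) /\
  X fzero /\
  (forall f g, X f -> X g -> X (fadd f g)) /\
  (forall a f, X f -> X (fscal a f)) /\
  (forall f, X f -> 0 <= N f) /\
  (forall f g, X f -> X g -> N (fadd f g) <= N f + N g) /\
  (forall a f, X f -> N (fscal a f) = Cmod a * N f) /\
  (forall f, X f -> N f = 0 -> forall z, in_disk z -> f z = RtoC 0) /\
  (forall u : nat -> C -> C, (forall n, X (u n)) ->
     (forall eps, 0 < eps -> exists n0, forall m n, (n0 <= m)%nat -> (n0 <= n)%nat ->
        N (fsub (u m) (u n)) < eps) ->
     exists f, X f /\ forall eps, 0 < eps -> exists n0, forall n, (n0 <= n)%nat ->
        N (fsub (u n) f) < eps).

(* Main.v *)
Require Import Defs.
From Stdlib Require Import Reals Lra FunctionalExtensionality.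
From Coquelicot Require Import Coquelicot.
Open Scope R_scope.

Lemma Cpow_le1 (z : C) k : Cmod z <= 1 -> Cmod (Cpow z k) <= 1.
Proof.
  intros Hz. induction k as [|k IH]; simpl.
  - rewrite Cmod_1; lra.
  - rewrite Cmod_mult.
    pose proof (Cmod_ge_0 z). pose proof (Cmod_ge_0 (Cpow z k)). nra.
Qed.

Lemma Cpow_lip (w z : C) k : Cmod w <= 1 -> Cmod z <= 1 ->
  Cmod (Cminus (Cpow w k) (Cpow z k)) <= INR k * Cmod (Cminus w z).
Proof.
  intros Hw Hz. induction k as [|k IH].
  - simpl. replace (Cminus 1 1) with (RtoC 0) by ring. rewrite Cmod_0. lra.
  - replace (Cminus (Cpow w (S k)) (Cpow z (S k))) with
      (Cplus (Cmult w (Cminus (Cpow w k) (Cpow z k))) (Cmult (Cminus w z) (Cpow z k)))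
      by (simpl; ring).
    eapply Rle_trans; [apply Cmod_triangle|].
    rewrite !Cmod_mult, S_INR.
    pose proof (Cpow_le1 z k Hz).
    pose proof (Cmod_ge_0 w). pose proof (Cmod_ge_0 (Cminus w z)).
    pose proof (Cmod_ge_0 (Cminus (Cpow w k) (Cpow z k))).
    pose proof (Cmod_ge_0 (Cpow z k)).
    nra.
Qed.

Lemma sum_n_S_C (b : nat -> C) m :
  @sum_n C_Ring b (S m) = Cplus (@sum_n C_Ring b m) (b (S m)).
Proof. rewrite sum_Sn. reflexivity. Qed.

Lemma poly_lip a n (w z : C) : Cmod w <= 1 -> Cmod z <= 1 ->
  Cmod (Cminus (polyfun a n w) (polyfun a n z)) <=
  sum_f_R0 (fun k => Cmod (a k) * INR k) n * Cmod (Cminus w z).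
Proof.
  intros Hw Hz. unfold polyfun. induction n as [|n IH].
  - rewrite !sum_O. simpl.
    replace (Cminus (Cmult (a 0%nat) 1) (Cmult (a 0%nat) 1)) with (RtoC 0) by ring.
    rewrite Cmod_0. lra.
  - rewrite !sum_n_S_C.
    match goal with |- Cmod (Cminus (Cplus ?A ?B) (Cplus ?C ?D)) <= _ =>
      replace (Cminus (Cplus A B) (Cplus C D)) with
        (Cplus (Cminus A C) (Cmult (a (S n)) (Cminus (Cpow w (S n)) (Cpow z (S n)))))
        by ring end.
    eapply Rle_trans; [apply Cmod_triangle|].
    rewrite Cmod_mult.
    replace (sum_f_R0 (fun k => Cmod (a k) * INR k) (S n)) with
      (sum_f_R0 (fun k => Cmod (a k) * INR k) n + Cmod (a (S n)) * INR (S n)) by reflexivity.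
    pose proof (Cpow_lip w z (S n) Hw Hz).
    pose proof (Cmod_ge_0 (a (S n))).
    assert (Cmod (a (S n)) * Cmod (Cminus (Cpow w (S n)) (Cpow z (S n))) <=
            Cmod (a (S n)) * (INR (S n) * Cmod (Cminus w z))) by
      (apply Rmult_le_compat_l; auto).
    nra.
Qed.

Lemma sum_nonneg a n : 0 <= sum_f_R0 (fun k => Cmod (a k) * INR k) n.
Proof.
  induction n as [|n IH].
  - change (0 <= Cmod (a 0%nat) * INR 0). pose proof (Cmod_ge_0 (a 0%nat)). pose proof (pos_INR 0). nra.
  - change (0 <= sum_f_R0 (fun k => Cmod (a k) * INR k) n + Cmod (a (S n)) * INR (S n)).
    pose proof (Cmod_ge_0 (a (S n))). pose proof (pos_INR (S n)). nra.
Qed.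

Theorem proposition4p1 (phi : R -> C -> C) (X : (C -> C) -> Prop) (N : (C -> C) -> R) :
  is_semigroup phi ->
  is_banach_space_of_analytic X N ->
  (* each composition operator C_t f = f o phi_t is bounded on X *)
  (forall t, 0 <= t -> exists K, forall f, X f ->
      X (fcomp f (phi t)) /\ N (fcomp f (phi t)) <= K * N f) ->
  (* (i) polynomials belong to X and are dense in X *)
  (forall a n, X (polyfun a n)) ->
  (forall f, X f -> forall eps, 0 < eps ->
      exists a n, N (fsub f (polyfun a n)) < eps) ->
  (* (ii) lattice-type property of the norm *)
  (exists Cc, 0 < Cc /\ forall f g, X f -> X g ->
      (forall z, in_disk z -> Cmod (f z) <= Cmod (g z)) -> N f <= Cc * N g) ->
  (* (iii) limsup_{t -> 0+} ||C_t|| < +oo *)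
  (exists M delta, 0 < delta /\ forall t, 0 < t < delta ->
      forall f, X f -> N (fcomp f (phi t)) <= M * N f) ->
  (* (iv) phi_t in X and ||phi_t - phi_0||_X -> 0 as t -> 0+ *)
  (forall t, 0 <= t -> X (phi t)) ->
  filterlim (fun t => N (fsub (phi t) (phi 0))) (at_right 0) (locally 0) ->
  (* conclusion: strong continuity *)
  forall f, X f ->
    filterlim (fun t => N (fsub (fcomp f (phi t)) f)) (at_right 0) (locally 0).
Proof.
  intros Hsg HB Hbd Hpol Hdense Hlat HM Hphi Hiv f Hf.
  destruct Hsg as [Han [Hdisk [H0 [Hcomp Hunif]]]].
  destruct HB as [Xan [X0 [Xadd [Xscal [Nnn [Ntri [Nscal [Nzero Hcompl]]]]]]]].
  destruct Hlat as [Cc [HCc Hlat]].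
  destruct HM as [M [d [Hd HM]]].
  assert (Xsub : forall u v, X u -> X v -> X (fsub u v)).
  { intros u v Hu Hv.
    replace (fsub u v) with (fadd u (fscal (Copp 1) v)).
    - apply Xadd; auto.
    - apply functional_extensionality; intro z; unfold fadd, fscal, fsub; ring. }
  assert (Nsym : forall u v, X u -> X v -> N (fsub u v) = N (fsub v u)).
  { intros u v Hu Hv.
    replace (fsub v u) with (fscal (Copp 1) (fsub u v)).
    - rewrite Nscal by auto. rewrite Cmod_m1. ring.
    - apply functional_extensionality; intro z; unfold fscal, fsub; ring. }
  assert (Xc : forall t u, 0 <= t -> X u -> X (fcomp u (phi t))).
  { intros t u Ht Hu. destruct (Hbd t Ht) as [K HK]. apply (HK u Hu). }
  apply filterlim_locally. intros eps.
  set (M' := Rabs M + 1).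
  assert (HM' : 0 < M') by (unfold M'; pose proof (Rabs_pos M); lra).
  assert (He1 : 0 < eps / (3 * M')).
  { apply Rdiv_lt_0_compat; [apply cond_pos| lra]. }
  destruct (Hdense f Hf _ He1) as [a [n Hp]].
  set (p := polyfun a n) in *.
  set (L := sum_f_R0 (fun k => Cmod (a k) * INR k) n).
  assert (HL : 0 <= L) by apply sum_nonneg.
  assert (He2 : 0 < eps / (3 * (Cc * (L + 1)))).
  { apply Rdiv_lt_0_compat; [apply cond_pos|]. nra. }
  pose proof (proj1 (filterlim_locally _ _) Hiv (mkposreal _ He2)) as Hev.
  assert (Hpos : at_right 0 (fun t => 0 < t)).
  { exists (mkposreal _ Rlt_0_1). intros; auto. }
  assert (Hlt : at_right 0 (fun t => t < d)).
  { exists (mkposreal _ Hd). intros y Hy _. simpl in Hy.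
    change (Rabs (y - 0) < d) in Hy. rewrite Rminus_0_r in Hy.
    pose proof (Rle_abs y). lra. }
  generalize (filter_and _ _ Hev (filter_and _ _ Hpos Hlt)).
  apply filter_imp. intros t [Ht2 [Ht0 Htd]].
  change (Rabs (N (fsub (phi t) (phi 0)) - 0) < eps / (3 * (Cc * (L + 1)))) in Ht2.
  change (Rabs (N (fsub (fcomp f (phi t)) f) - 0) < eps).
  rewrite Rminus_0_r in *.
  assert (Xp : X p) by apply Hpol.
  set (g := fsub f p).
  assert (Xg : X g) by (apply Xsub; auto).
  assert (Xgt : X (fcomp g (phi t))) by (apply Xc; auto; lra).
  assert (Xpt : X (fcomp p (phi t))) by (apply Xc; auto; lra).
  assert (Xd : X (fsub (fcomp p (phi t)) p)) by (apply Xsub; auto).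
  assert (Xpf : X (fsub p f)) by (apply Xsub; auto).
  assert (Xphi : X (fsub (phi t) (phi 0))) by (apply Xsub; apply Hphi; lra).
  assert (Heq : fsub (fcomp f (phi t)) f =
     fadd (fcomp g (phi t)) (fadd (fsub (fcomp p (phi t)) p) (fsub p f))).
  { apply functional_extensionality; intro z; unfold g, fadd, fsub, fcomp; ring. }
  assert (Xtot : X (fsub (fcomp f (phi t)) f)) by (apply Xsub; auto; apply Xc; auto; lra).
  rewrite Rabs_pos_eq by auto.
  rewrite Heq.
  assert (B1 : N (fcomp g (phi t)) <= Rabs M * N g).
  { eapply Rle_trans; [apply HM; auto; lra|].
    pose proof (Nnn g Xg). pose proof (Rle_abs M). nra. }
  assert (B3 : N (fsub p f) = N g) by (unfold g; symmetry; apply Nsym; auto).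
  assert (B2 : N (fsub (fcomp p (phi t)) p) <= Cc * (L * N (fsub (phi t) (phi 0)))).
  { replace (L * N (fsub (phi t) (phi 0))) with
        (N (fscal (RtoC L) (fsub (phi t) (phi 0)))).
    2:{ rewrite Nscal by auto. rewrite Cmod_R, Rabs_pos_eq; auto. }
    apply Hlat; auto.
    intros z Hz. unfold fsub, fcomp, fscal.
    rewrite Cmod_mult, Cmod_R, Rabs_pos_eq by auto.
    rewrite (H0 z Hz).
    apply poly_lip.
    - pose proof (Hdisk t ltac:(lra) z Hz). unfold in_disk in *. lra.
    - unfold in_disk in Hz. lra. }
  pose proof (Ntri _ _ Xgt (Xadd _ _ Xd Xpf)) as T1.
  pose proof (Ntri _ _ Xd Xpf) as T2.
  pose proof (Nnn g Xg) as Ng0.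
  pose proof (Nnn _ Xphi) as Nphi0.
  assert (E1 : Rabs M * N g + N g < eps / 3).
  { assert (HH : M' * N g < eps / 3).
    { replace (eps / 3) with (M' * (eps / (3 * M'))) by (field; lra).
      apply Rmult_lt_compat_l; auto. }
    unfold M' in HH. lra. }
  assert (E2 : Cc * (L * N (fsub (phi t) (phi 0))) < eps / 3).
  { assert (HA : Cc * (L * N (fsub (phi t) (phi 0))) <=
            (Cc * (L + 1)) * N (fsub (phi t) (phi 0))) by nra.
    assert (HB : (Cc * (L + 1)) * N (fsub (phi t) (phi 0)) <
            (Cc * (L + 1)) * (eps / (3 * (Cc * (L + 1))))).
    { apply Rmult_lt_compat_l; [nra | eapply Rle_lt_trans; [apply Rle_abs | exact Ht2]]. }
    replace ((Cc * (L + 1)) * (eps / (3 * (Cc * (L + 1))))) with (eps / 3) in HB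
      by (field; nra).
    lra. }
  pose proof (cond_pos eps). lra.
Qed.
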